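(* Suppose the scheme satisfies the tensorial $k$-$k$-order orthogonality condition and $u\in H^{k+2}(\Omega)$. Then for every $K=K_{i,j}\in\mathcal T_h$, $$\int_{x_{i-1}}^{x_i}R^S_{x,K}\,dx=\int_{x_{i-1}}^{x_i}R^{S,1}_{x,K}\,dx=0,\qquad \int_{y_{j-1}}^{y_j}R^S_{y,K}\,dy=\int_{y_{j-1}}^{y_j}R^{S,1}_{y,K}\,dy=0.$$
   Context: Setting: $\Omega=(0,1)^2$, $k\ge1$; mesh $0=x_0<\dots<x_{N_x}=1$, $0=y_0<\dots<y_{N_y}=1$, $K_{i,j}=[x_{i-1},x_i]\times[y_{j-1},y_j]$, $F_K:[-1,1]^2\to K$ affine with $x=\frac{x_i-x_{i-1}}{2}\hat x+\frac{x_{i-1}+x_i}{2}$, $y=\frac{y_j-y_{j-1}}{2}\hat y+\frac{y_{j-1}+y_j}{2}$. Dual parameters $-1<\alpha^x_1<\dots<\alpha^x_k<1$, $-1<\alpha^y_1<\dots<\alpha^y_k<1$, interpolation parameters $-1=a^x_0<\dots<a^x_k=1$, $-1=a^y_0<\dots<a^y_k=1$ with $a^x_{s-1}<\alpha^x_s<a^x_s$, $a^y_{s-1}<\alpha^y_s<a^y_s$; $\alpha^x_0=\alpha^y_0=-1$, $\alpha^x_{k+1}=\alpha^y_{k+1}=1$. Orthogonality condition: for $k-1\le r\le 2k-2$, the $x$-direction parameters satisfy the $k$-$r$-order orthogonality condition if $\int_{-1}^1 g(\hat x)(w(\hat x)-(\hat\Pi_xw)(\hat x))d\hat x=0$ for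 all $g\in P^r([-1,1])$, $w\in P^1([-1,1])$, where $(\hat\Pi_xw)(\hat x)=w(a^x_s)$ for $\hat x\in(\alpha^x_s,\alpha^x_{s+1})$; analogously in $y$. The tensorial $k$-$r$-order condition means both directions satisfy it. M-decomposition: $L_n$ Legendre polynomials; $\hat M_0=1$, $\hat M_1=\hat x$, $\hat M_n(\hat x)=\int_{-1}^{\hat x}L_{n-1}$ ($n\ge2$); $M^x_s(x)=\hat M_s(\hat x)$, $M^y_t(y)=\hat M_t(\hat y)$ on $K$. $\lambda_0(g)=\frac{g(1)+g(-1)}2$, $\lambda_1(g)=\frac{g(1)-g(-1)}2$, $\lambda_n(g)=\frac{2n-1}{2}\int_{-1}^1g'L_{n-1}$ ($n\ge2$); M-coefficients $b_{s,t}=b^K_{s,t}=\lambda^{(\hat x)}_s\lambda^{(\hat y)}_t(u\circ F_K)$. AMD-Super corrections: on each $K$, for $t\in\{0,1\}$ the numbers $b^*_{s,t}$ ($2\le s\le k$) solve $\sum_{s=2}^k b^*_{s,t}L_{s-1}(\alpha^x_m)+b_{k+1,t}L_k(\alpha^x_m)=0$, $m=1,\dots,k-1$; for $s\in\{0,1\}$ the numbers $b^*_{s,t}$ ($2\le t\le k$) solve $\sum_{t=2}^k b^*_{s,t}L_{t-1}(\alpha^y_m)+b_{s,k+1}L_k(\alpha^y_m)=0$, $m=1,\dots,k-1$ (systems assumed uniquely solvable). $R^S_{x,K}=\sum_{s=2}^kb^*_{s,0}M^x_s+b_{k+1,0}M^x_{k+1}$, $R^{S,1}_{x,K}=\sum_{s=2}^kb^*_{s,1}M^x_s+b_{k+1,1}M^x_{k+1}$,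 $R^S_{y,K}=\sum_{t=2}^kb^*_{0,t}M^y_t+b_{0,k+1}M^y_{k+1}$, $R^{S,1}_{y,K}=\sum_{t=2}^kb^*_{1,t}M^y_t+b_{1,k+1}M^y_{k+1}$. *)

(* Defs.v *)
From Stdlib Require Import Reals Lra Lia.
From Coquelicot Require Import Coquelicot.
Open Scope R_scope.

(* Legendre polynomials via the three-term recurrence:
   leg_pair n x = (L_n x, L_(n+1) x). *)
Fixpoint leg_pair (n : nat) (x : R) : R * R :=
  match n with
  | O => (1, x)
  | S m => let (p, q) := leg_pair m x in
           (q, ((2 * INR m + 3) * x * q - (INR m + 1) * p) / (INR m + 2))
  end.

Definition Legendre (n : nat) (x : R) : R := fst (leg_pair n x).

Definition Mhat (n : nat) (x : R) : R :=
  match n with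
  | O => 1
  | S O => x
  | S (S _) => RInt (Legendre (n - 1)) (-1) x
  end.

Definition lam (n : nat) (g : R -> R) : R :=
  match n with
  | O => (g 1 + g (-1)) / 2
  | S O => (g 1 - g (-1)) / 2
  | S (S _) => (2 * INR n - 1) / 2 *
               RInt (fun t => Derive g t * Legendre (n - 1) t) (-1) 1
  end.

Definition Fmap (l r xh : R) : R := (r - l) / 2 * xh + (l + r) / 2.
Definition hatmap (l r x : R) : R := (2 * x - (l + r)) / (r - l).

Definition Mcoef (xs ys : nat -> R) (u : R -> R -> R) (i j s t : nat) : R :=
  lam s (fun xh => lam t (fun yh =>
    u (Fmap (xs (i - 1)%nat) (xs i) xh) (Fmap (ys (j - 1)%nat) (ys j) yh))).

Definition mesh1d (N : nat) (zs : nat -> R) : Prop :=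
  (0 < N)%nat /\ zs O = 0 /\ zs N = 1 /\
  forall i, (i < N)%nat -> zs i < zs (S i).

Definition valid_params (k : nat) (alpha a : nat -> R) : Prop :=
  alpha O = -1 /\ alpha (S k) = 1 /\ a O = -1 /\ a k = 1 /\
  (forall s, (s < k)%nat -> a s < a (S s)) /\
  (forall s, (1 <= s < k)%nat -> alpha s < alpha (S s)) /\
  (forall s, (1 <= s <= k)%nat -> -1 < alpha s < 1) /\
  (forall s, (1 <= s <= k)%nat -> a (s - 1)%nat < alpha s < a s).

(* k-r-order orthogonality condition (k-1 <= r <= 2k-2):
   int_{-1}^1 g (w - Pi w) = 0 for all g in P^r, w in P^1, where
   Pi w = w(a_s) on (alpha_s, alpha_(s+1)), s = 0..k; the integral is
   written out piecewise. *)
Definition ortho_cond (k r : nat) (alpha a : nat -> R) : Prop :=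
  (k - 1 <= r <= 2 * k - 2)%nat /\
  forall (c : nat -> R) (w0 w1 : R),
    let g := fun x => sum_n (fun n => c n * x ^ n) r in
    let w := fun x => w0 + w1 * x in
    sum_n (fun s => RInt (fun x => g x * (w x - w (a s))) (alpha s) (alpha (S s))) k = 0.

(* the (k-1)x(k-1) system  sum_{s=2}^k c_s L_{s-1}(alpha_m) = rhs_m,
   m = 1..k-1, is uniquely solvable (square system: injectivity) *)
Definition uniquely_solvable (k : nat) (alpha : nat -> R) : Prop :=
  forall c : nat -> R,
    (forall m, (1 <= m <= k - 1)%nat ->
       sum_n_m (fun s => c s * Legendre (s - 1) (alpha m)) 2 k = 0) ->
    forall s, (2 <= s <= k)%nat -> c s = 0.

(* R^S_{x,K} (t = 0) and R^{S,1}_{x,K} (t = 1), as functions of x *)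
Definition RSx (k : nat) (xs ys : nat -> R) (u : R -> R -> R) (i j : nat)
  (bstar : nat -> nat -> R) (t : nat) (x : R) : R :=
  let xh := hatmap (xs (i - 1)%nat) (xs i) x in
  sum_n_m (fun s => bstar s t * Mhat s xh) 2 k
  + Mcoef xs ys u i j (S k) t * Mhat (S k) xh.

(* R^S_{y,K} (s = 0) and R^{S,1}_{y,K} (s = 1), as functions of y *)
Definition RSy (k : nat) (xs ys : nat -> R) (u : R -> R -> R) (i j : nat)
  (bstar : nat -> nat -> R) (s : nat) (y : R) : R :=
  let yh := hatmap (ys (j - 1)%nat) (ys j) y in
  sum_n_m (fun t => bstar s t * Mhat t yh) 2 k
  + Mcoef xs ys u i j s (S k) * Mhat (S k) yh.

(* Main.v *)
Require Import Defs.
From Stdlib Require Import Reals.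
From Coquelicot Require Import Coquelicot.
Open Scope R_scope.
From Stdlib Require Import Lra Lia List Arith.
Ltac rr := match goal with |- ?a = ?b => change (@eq R a b) end.

Fixpoint peval (p : list R) (x : R) : R :=
  match p with nil => 0 | c :: q => c + x * peval q x end.

Fixpoint padd (p q : list R) : list R :=
  match p, q with
  | nil, _ => q
  | _, nil => p
  | a :: p', b :: q' => (a + b) :: padd p' q'
  end.

Lemma padd_eval p q x : peval (padd p q) x = peval p x + peval q x.
Proof. revert q; induction p as [|a p IH]; intros [|b q]; simpl; try rewrite IH; ring. Qed.

Lemma padd_len p q : length (padd p q) = Nat.max (length p) (length q).
Proof. revert q; induction p as [|a p IH]; intros [|b q]; simpl; auto. Qed.

Definition PolyN (n : nat) (f : R -> R) : Prop :=
  exists p, (length p <= n)%nat /\ forall x, f x = peval p x.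

Lemma PolyN_ext n f g : PolyN n f -> (forall x, f x = g x) -> PolyN n g.
Proof. intros [p [Hl Hp]] H; exists p; split; auto; intros x; rewrite <- H; auto. Qed.

Lemma PolyN_mono n m f : (n <= m)%nat -> PolyN n f -> PolyN m f.
Proof. intros Hnm [p [Hl Hp]]; exists p; split; auto; lia. Qed.

Lemma PolyN_add n f g : PolyN n f -> PolyN n g -> PolyN n (fun x => f x + g x).
Proof.
  intros [p [Hl Hp]] [q [Hl' Hq]]; exists (padd p q); split.
  rewrite padd_len; lia. intros x; rewrite padd_eval, Hp, Hq; auto.
Qed.

Lemma PolyN_scal n c f : PolyN n f -> PolyN n (fun x => c * f x).
Proof.
  intros [p [Hl Hp]]; exists (map (fun a => c * a) p); split.
  rewrite length_map; auto.
  intros x; cbv beta; rewrite Hp; clear; induction p; simpl; [ring|rewrite <- IHp; ring].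
Qed.

Lemma PolyN_mulx n f : PolyN n f -> PolyN (S n) (fun x => x * f x).
Proof.
  intros [p [Hl Hp]]; exists (0 :: p); split. simpl; lia.
  intros x; simpl; rewrite Hp; ring.
Qed.

Lemma PolyN_const c : PolyN 1 (fun _ => c).
Proof. exists (c :: nil); split; simpl; auto; intros; ring. Qed.

Lemma PolyN_zero n : PolyN n (fun _ => 0).
Proof. exists nil; split; simpl; auto; lia. Qed.

Lemma peval_cont p x : continuous (peval p) x.
Proof.
  induction p as [|c p IH]; simpl.
  apply continuous_const.
  apply (continuous_plus (fun _ => c) (fun x => x * peval p x)).
  apply continuous_const.
  apply (continuous_mult (fun x => x) (peval p)); auto. apply continuous_id.
Qed.

Lemma PolyN_cont n f x : PolyN n f -> continuous f x.
Proof.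
  intros [p [_ Hp]]. apply (continuous_ext (peval p)). intros; auto. apply peval_cont.
Qed.

Lemma isd_const (c x : R) : is_derive (fun _ : R => c) x 0.
Proof. apply (is_derive_const (K:=R_AbsRing) (V:=R_NormedModule) c x). Qed.

Lemma isd_val (f : R -> R) (x l l' : R) : is_derive f x l -> l = l' -> is_derive f x l'.
Proof. intros H <-; auto. Qed.
Lemma isd_id (x : R) : is_derive (fun y : R => y) x 1.
Proof. apply (is_derive_id (K:=R_AbsRing) x). Qed.
Lemma isd_plus (f g : R -> R) df dg x : is_derive f x df -> is_derive g x dg ->
  is_derive (fun y => f y + g y) x (df + dg).
Proof. intros; apply (is_derive_plus f g); auto. Qed.
Lemma isd_minus (f g : R -> R) df dg x : is_derive f x df -> is_derive g x dg ->
  is_derive (fun y => f y - g y) x (df - dg).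
Proof. intros; apply (is_derive_minus f g); auto. Qed.
Lemma isd_mult (f g : R -> R) df dg x : is_derive f x df -> is_derive g x dg ->
  is_derive (fun y => f y * g y) x (df * g x + f x * dg).
Proof. intros. apply (is_derive_mult (K:=R_AbsRing) f g); auto. intros; apply Rmult_comm. Qed.
Lemma isd_scal (f : R -> R) c df x : is_derive f x df -> is_derive (fun y => c * f y) x (c * df).
Proof. intros; apply is_derive_scal; auto. Qed.

Lemma peval_deriv p : exists q, (length q <= length p - 1)%nat /\
  forall x, is_derive (peval p) x (peval q x).
Proof.
  induction p as [|c p [q [Hl Hq]]].
  - exists nil; split; simpl; auto. intros; apply isd_const.
  - destruct p as [|c' p'].
    + exists nil; split; simpl; auto. intros x.
      apply (is_derive_ext (fun _ => c)). intros; simpl; ring. apply isd_const.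
    + exists (padd (c' :: p') (0 :: q)); split.
      rewrite padd_len; simpl in *; lia.
      intros x. rewrite padd_eval. simpl peval at 2.
      set (pp := c' :: p') in *.
      apply (is_derive_ext (fun x => c + x * peval pp x)). intros; simpl; auto.
      eapply isd_val. apply isd_plus. apply isd_const.
      apply isd_mult. apply isd_id. apply Hq. unfold pp; simpl; ring.
Qed.

Lemma PolyN_deriv n f : PolyN (S n) f -> exists g, PolyN n g /\ forall x, is_derive f x (g x).
Proof.
  intros [p [Hl Hp]]. destruct (peval_deriv p) as [q [Hq Hd]].
  exists (peval q); split. exists q; split; auto; lia.
  intros x; apply (is_derive_ext (peval p)). intros; auto. apply Hd.
Qed.

Lemma peval_sum q N : (length q <= S N)%nat -> forall x,
  peval q x = sum_n (fun n => nth n q 0 * x ^ n) N.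
Proof.
  revert N; induction q as [|c q IH]; intros N Hl x.
  - simpl. unfold sum_n. rewrite (sum_n_m_ext_loc _ (fun _ => zero)).
    rewrite sum_n_m_const_zero; auto. intros [|k] _; simpl; unfold zero; simpl; ring.
  - destruct N as [|N].
    + destruct q; simpl in Hl; [|lia]. rewrite sum_O; simpl; ring.
    + unfold sum_n. rewrite sum_Sn_m by lia. rewrite <- sum_n_m_S.
      simpl peval. rewrite (IH N) by (simpl in Hl; lia).
      unfold sum_n. change (x * sum_n_m (fun n => nth n q 0 * x ^ n) 0 N) with (@mult R_Ring x (sum_n_m (fun n => nth n q 0 * x ^ n) 0 N)). rewrite <- (sum_n_m_mult_l (K:=R_Ring)).
      simpl. unfold plus; simpl. f_equal. ring.
      apply sum_n_m_ext_loc; intros k _. unfold mult; simpl. ring.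
Qed.

Lemma leg_pair_S n x : leg_pair (S n) x =
  (snd (leg_pair n x), ((2 * INR n + 3) * x * snd (leg_pair n x) - (INR n + 1) * fst (leg_pair n x)) / (INR n + 2)).
Proof. simpl. destruct (leg_pair n x); reflexivity. Qed.

Lemma Leg0 x : Legendre 0 x = 1.  Proof. reflexivity. Qed.
Lemma Leg1 x : Legendre 1 x = x.  Proof. reflexivity. Qed.
Lemma Leg_snd n x : snd (leg_pair n x) = Legendre (S n) x.
Proof. unfold Legendre; rewrite leg_pair_S; reflexivity. Qed.

Lemma Leg_rec m x : Legendre (S (S m)) x =
  ((2 * INR m + 3) * x * Legendre (S m) x - (INR m + 1) * Legendre m x) / (INR m + 2).
Proof.
  rewrite <- (Leg_snd (S m)). rewrite leg_pair_S. cbn [snd].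
  rewrite Leg_snd. reflexivity.
Qed.

Lemma INR_pos2 m : INR m + 2 <> 0.
Proof. generalize (pos_INR m); lra. Qed.

Lemma Leg_poly n : PolyN (S n) (Legendre n) /\ PolyN (S (S n)) (Legendre (S n)).
Proof.
  induction n as [|m [IH1 IH2]].
  - split. apply (PolyN_ext _ (fun _ => 1)). apply PolyN_const. intros; reflexivity.
    apply (PolyN_ext _ (fun x => x * 1)). apply PolyN_mulx, PolyN_const.
    intros; rewrite Leg1; ring.
  - split; auto.
    apply (PolyN_ext _ (fun x => (/ (INR m + 2) * (2 * INR m + 3)) * (x * Legendre (S m) x)
                                 + (- / (INR m + 2) * (INR m + 1)) * Legendre m x)).
    apply PolyN_add. apply PolyN_scal, PolyN_mulx; auto.
    apply PolyN_scal. apply (PolyN_mono (S m)); auto.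
    intros x; rewrite Leg_rec. field. apply INR_pos2.
Qed.

Lemma Leg_at1 n : Legendre n 1 = 1 /\ Legendre (S n) 1 = 1.
Proof.
  induction n as [|m [H1 H2]]. split; reflexivity.
  split; auto. rewrite Leg_rec, H1, H2. field. apply INR_pos2.
Qed.

Lemma Leg_atm1 n : Legendre n (-1) = (-1) ^ n /\ Legendre (S n) (-1) = (-1) ^ (S n).
Proof.
  induction n as [|m [H1 H2]]. split. reflexivity. rewrite Leg1; simpl; ring.
  split; auto. rewrite Leg_rec, H1, H2. simpl. field. apply INR_pos2.
Qed.

Definition dL n x := Derive (Legendre n) x.

Lemma Leg_isd n x : is_derive (Legendre n) x (dL n x).
Proof.
  destruct (Leg_poly n) as [[p [_ Hp]] _].
  destruct (peval_deriv p) as [q [_ Hq]].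
  assert (H : is_derive (Legendre n) x (peval q x)).
  { apply (is_derive_ext (peval p)). intros; auto. auto. }
  unfold dL. rewrite (is_derive_unique _ _ _ H). auto.
Qed.

Lemma Leg_cont n x : continuous (Legendre n) x.
Proof. apply (PolyN_cont (S n)). apply Leg_poly. Qed.

Lemma dL0 x : dL 0 x = 0.
Proof. unfold dL. apply is_derive_unique. apply (is_derive_ext (fun _ => 1)). reflexivity. apply isd_const. Qed.
Lemma dL1 x : dL 1 x = 1.
Proof. unfold dL. apply is_derive_unique. apply (is_derive_ext (fun y => y)). reflexivity. apply isd_id. Qed.

Lemma dL_rec m x : (INR m + 2) * dL (S (S m)) x =
  (2 * INR m + 3) * (Legendre (S m) x + x * dL (S m) x) - (INR m + 1) * dL m x.
Proof.
  assert (H : is_derive (Legendre (S (S m))) x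
     (/ (INR m + 2) * ((2 * INR m + 3) * (1 * Legendre (S m) x + x * dL (S m) x) - (INR m + 1) * dL m x))).
  { apply (is_derive_ext (fun y => / (INR m + 2) * ((2 * INR m + 3) * (y * Legendre (S m) y) - (INR m + 1) * Legendre m y))).
    intros t; cbv beta; rewrite Leg_rec; match goal with |- ?a = ?b => change (@eq R a b) end; field; apply INR_pos2.
    apply isd_scal. apply isd_minus. apply isd_scal. apply isd_mult. apply isd_id. apply Leg_isd.
    apply isd_scal. apply Leg_isd. }
  unfold dL at 1. rewrite (is_derive_unique _ _ _ H). field. apply INR_pos2.
Qed.

Lemma Leg_ids m x :
  dL (S m) x = x * dL m x + (INR m + 1) * Legendre m x /\
  x * dL (S m) x - dL m x = (INR m + 1) * Legendre (S m) x.
Proof.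
  induction m as [|m [H3 H4]].
  - rewrite dL0, dL1, Leg0, Leg1. simpl. split; ring.
  - assert (E3 : dL (S (S m)) x = x * dL (S m) x + (INR (S m) + 1) * Legendre (S m) x).
    { apply (Rmult_eq_reg_l (INR m + 2)); [|apply INR_pos2].
      rewrite dL_rec. rewrite S_INR.
      replace (dL m x) with (x * dL (S m) x - (INR m + 1) * Legendre (S m) x) by lra.
      ring. }
    split; auto.
    rewrite E3. rewrite S_INR.
    assert (H4' : x * (x * dL (S m) x - dL m x) = x * ((INR m + 1) * Legendre (S m) x)) by (rewrite H4; auto).
    assert (R2 : (INR m + 2) * Legendre (S (S m)) x = (2*INR m+3) * x * Legendre (S m) x - (INR m+1)*Legendre m x)
      by (rewrite Leg_rec; field; apply INR_pos2).
    lra.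
Qed.

Lemma Leg_int n : (1 <= n)%nat -> RInt (Legendre n) (-1) 1 = 0.
Proof.
  intros Hn. destruct n as [|m]; [lia|].
  assert (H : is_RInt (Legendre (S m)) (-1) 1
     (minus ((Legendre (S (S m)) 1 - Legendre m 1) / (2 * INR m + 3))
            ((Legendre (S (S m)) (-1) - Legendre m (-1)) / (2 * INR m + 3)))).
  { apply (is_RInt_derive (fun y => (Legendre (S (S m)) y - Legendre m y) / (2 * INR m + 3))).
    - intros y _. eapply isd_val.
      apply (is_derive_ext (fun y => / (2 * INR m + 3) * (Legendre (S (S m)) y - Legendre m y))).
      intros t; cbv beta; match goal with |- ?a = ?b => change (@eq R a b) end; unfold Rdiv; ring.
      apply isd_scal, isd_minus; apply Leg_isd.
      destruct (Leg_ids (S m) y) as [A _]. destruct (Leg_ids m y) as [_ B].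
      rewrite A. rewrite S_INR in *.
      replace (dL m y) with (y * dL (S m) y - (INR m + 1) * Legendre (S m) y) by lra.
      field. generalize (pos_INR m); lra.
    - intros; apply Leg_cont. }
  rewrite (is_RInt_unique _ _ _ _ H).
  destruct (Leg_at1 m) as [A1 _]. destruct (Leg_at1 (S m)) as [_ A2].
  destruct (Leg_atm1 m) as [B1 _]. destruct (Leg_atm1 (S m)) as [_ B2].
  rewrite A1, A2, B1, B2. unfold minus, plus, opp; simpl. field. generalize (pos_INR m); lra.
Qed.

Lemma sumR_S (a : nat -> R) n m : (n <= S m)%nat -> sum_n_m a n (S m) = sum_n_m a n m + a (S m).
Proof. intros; rewrite sum_n_Sm; auto. Qed.
Lemma sumR_0 (a : nat -> R) n m : (m < n)%nat -> sum_n_m a n m = 0.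
Proof. intros; rewrite sum_n_m_zero; auto. Qed.
Lemma sumR_n (a : nat -> R) n : sum_n_m a n n = a n.
Proof. apply sum_n_n. Qed.

Lemma isd_sum (f : nat -> R -> R) (df : nat -> R) n m x :
  (forall s, (n <= s <= m)%nat -> is_derive (f s) x (df s)) ->
  is_derive (fun z => sum_n_m (fun s => f s z) n m) x (sum_n_m df n m).
Proof.
  induction m as [|m IH]; intros H.
  - destruct n as [|n].
    + apply (is_derive_ext (f 0%nat)). intros; rewrite sumR_n; auto.
      rewrite sumR_n; apply H; lia.
    + apply (is_derive_ext (fun _ => 0)). intros; rewrite sumR_0; auto; lia.
      rewrite sumR_0 by lia. apply isd_const.
  - destruct (le_lt_dec n (S m)) as [Hle|Hlt].
    + apply (is_derive_ext (fun z => sum_n_m (fun s => f s z) n m + f (S m) z)).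
      intros; rewrite sumR_S; auto.
      rewrite sumR_S by auto. apply isd_plus. apply IH; intros; apply H; lia. apply H; lia.
    + apply (is_derive_ext (fun _ => 0)). intros; rewrite sumR_0; auto.
      rewrite sumR_0 by auto. apply isd_const.
Qed.

Lemma PolyN_sum N (f : nat -> R -> R) n m :
  (forall s, (n <= s <= m)%nat -> PolyN N (f s)) ->
  PolyN N (fun z => sum_n_m (fun s => f s z) n m).
Proof.
  induction m as [|m IH]; intros H.
  - destruct n as [|n].
    + apply (PolyN_ext _ (f 0%nat)). apply H; lia. intros; rewrite sumR_n; auto.
    + apply (PolyN_ext _ (fun _ => 0)). apply PolyN_zero. intros; rewrite sumR_0; auto; lia.
  - destruct (le_lt_dec n (S m)) as [Hle|Hlt].
    + apply (PolyN_ext _ (fun z => sum_n_m (fun s => f s z) n m + f (S m) z)).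
      apply PolyN_add. apply IH; intros; apply H; lia. apply H; lia.
      intros; rewrite sumR_S; auto.
    + apply (PolyN_ext _ (fun _ => 0)). apply PolyN_zero. intros; rewrite sumR_0; auto.
Qed.

Lemma sum_zero_loc (a : nat -> R) n m : (forall s, (n <= s <= m)%nat -> a s = 0) -> sum_n_m a n m = 0.
Proof.
  intros H. rewrite (sum_n_m_ext_loc _ (fun _ => zero)). rewrite sum_n_m_const_zero; reflexivity.
  intros; rewrite H; auto.
Qed.

Lemma Mhat_RInt s z : (2 <= s)%nat -> Mhat s z = RInt (Legendre (s - 1)) (-1) z.
Proof. intros H. destruct s as [|[|s]]; try lia. reflexivity. Qed.

Lemma ex_RInt_Leg n a b : ex_RInt (Legendre n) a b.
Proof. apply (ex_RInt_continuous (V:=R_CompleteNormedModule)); intros; apply Leg_cont. Qed.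

Lemma Mhat_isd s z : (2 <= s)%nat -> is_derive (Mhat s) z (Legendre (s - 1) z).
Proof.
  intros H. apply (is_derive_ext (RInt (Legendre (s - 1)) (-1))).
  intros; rewrite Mhat_RInt; auto.
  apply (is_derive_RInt _ _ (-1)). apply filter_forall. intros; apply (RInt_correct (V:=R_CompleteNormedModule)), ex_RInt_Leg.
  apply Leg_cont.
Qed.

Lemma Mhat_m1 s : (2 <= s)%nat -> Mhat s (-1) = 0.
Proof. intros; rewrite Mhat_RInt, RInt_point; auto. Qed.

Lemma Mhat_1 s : (2 <= s)%nat -> Mhat s 1 = 0.
Proof. intros; rewrite Mhat_RInt by auto. apply Leg_int. lia. Qed.

Lemma Abel (T F a : nat -> R) k :
  sum_n (fun s => (T (S s) - a s * F (S s)) - (T s - a s * F s)) k =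
  T (S k) - T 0%nat - a k * F (S k) + a 0%nat * F 0%nat + sum_n_m (fun s => (a s - a (s-1)%nat) * F s) 1 k.
Proof.
  induction k as [|k IH].
  - rewrite sum_O, sumR_0 by lia. rr; ring.
  - unfold sum_n in *. rewrite !sumR_S by lia. rewrite IH. simpl (S k - 1)%nat. rewrite Nat.sub_0_r. rr; ring.
Qed.

Lemma ex_RInt_Poly n f a b : PolyN n f -> ex_RInt f a b.
Proof. intros H. apply (ex_RInt_continuous (V:=R_CompleteNormedModule)); intros; eapply PolyN_cont; eauto. Qed.

Lemma Quad k alpha a f : valid_params k alpha a -> ortho_cond k k alpha a -> PolyN (S (S k)) f ->
  RInt f (-1) 1 = sum_n_m (fun s => (a s - a (s-1)%nat) * f (alpha s)) 1 k.
Proof.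
  intros [Ha0 [HaS [Hb0 [Hbk _]]]] [_ Hor] Hf.
  destruct Hf as [p [Hl Hp]]. destruct (peval_deriv p) as [q [Hq Hd]].
  specialize (Hor (fun n => nth n q 0) 0 1). cbv zeta in Hor.
  set (Pa := fun y => RInt f (-1) y).
  assert (HPa : forall y, is_derive Pa y (f y)).
  { intros y. apply (is_derive_RInt _ _ (-1)). apply filter_forall. intros.
    apply (RInt_correct (V:=R_CompleteNormedModule)). apply (ex_RInt_Poly (S (S k))). exists p; auto.
    apply (PolyN_cont (S (S k))). exists p; auto. }
  assert (Hfd : forall y, is_derive f y (peval q y)).
  { intros y. apply (is_derive_ext (peval p)). intros; auto. auto. }
  set (T := fun j => f (alpha j) * alpha j - Pa (alpha j)).
  set (F := fun j => f (alpha j)).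
  rewrite (sum_n_ext _ (fun s => (T (S s) - a s * F (S s)) - (T s - a s * F s))) in Hor.
  2:{ intros s.
    rewrite (RInt_ext _ (fun x => peval q x * (x - a s))).
    2:{ intros x _. cbv beta. rewrite <- peval_sum by lia. rr; ring. }
    assert (D : forall y, Rmin (alpha s) (alpha (S s)) <= y <= Rmax (alpha s) (alpha (S s)) ->
       is_derive (fun y => f y * (y - a s) - Pa y) y (peval q y * (y - a s))).
    { intros y _. eapply isd_val. apply isd_minus. apply isd_mult. apply Hfd.
      apply isd_minus. apply isd_id. apply isd_const. apply HPa. cbv beta; rr; ring. }
    assert (C : forall y, Rmin (alpha s) (alpha (S s)) <= y <= Rmax (alpha s) (alpha (S s)) ->
       continuous (fun x => peval q x * (x - a s)) y).
    { intros y _. apply (continuous_mult (K:=R_AbsRing) (peval q) (fun y => y - a s)). apply peval_cont.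
      apply (continuous_minus (fun y => y) (fun _ => a s)). apply continuous_id. apply continuous_const. }
    rewrite (is_RInt_unique _ _ _ _ (is_RInt_derive (fun y => f y * (y - a s) - Pa y)
        (fun x => peval q x * (x - a s)) (alpha s) (alpha (S s)) D C)).
    unfold T, F, minus, plus, opp; simpl. rr; ring. }
  rewrite Abel in Hor. unfold T, F in Hor. rewrite Ha0, HaS, Hb0, Hbk in Hor.
  assert (E : Pa (-1) = 0) by (unfold Pa; rewrite RInt_point; reflexivity).
  rewrite E in Hor. unfold Pa in Hor. unfold Pa. rr. lra.
Qed.

Lemma Gen k alpha a (b : nat -> R) (B l r : R) :
  (1 <= k)%nat -> valid_params k alpha a -> ortho_cond k k alpha a -> l < r ->
  (forall m, (1 <= m <= k - 1)%nat ->
     sum_n_m (fun s => b s * Legendre (s - 1) (alpha m)) 2 k + B * Legendre k (alpha m) = 0) ->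
  RInt (fun x => sum_n_m (fun s => b s * Mhat s (hatmap l r x)) 2 k + B * Mhat (S k) (hatmap l r x)) l r = 0.
Proof.
  intros Hk Hv Ho Hlr Hm.
  set (P := fun x => sum_n_m (fun s => b s * Legendre (s - 1) x) 2 k + B * Legendre k x).
  set (Fh := fun z => sum_n_m (fun s => b s * Mhat s z) 2 k + B * Mhat (S k) z).
  assert (HPp : PolyN (S k) P).
  { apply PolyN_add. apply PolyN_sum. intros s Hs. apply PolyN_scal.
    apply (PolyN_mono (S (s - 1))). lia. apply Leg_poly.
    apply PolyN_scal, Leg_poly. }
  assert (HFd : forall z, is_derive Fh z (P z)).
  { intros z. apply isd_plus. apply (isd_sum (fun s z => b s * Mhat s z)).
    intros s Hs. apply isd_scal. apply Mhat_isd; lia.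
    apply isd_scal. generalize (Mhat_isd (S k) z). rewrite Nat.sub_succ, Nat.sub_0_r. intros H; apply H; lia. }
  assert (HFm1 : Fh (-1) = 0).
  { unfold Fh. rewrite Mhat_m1 by lia. rewrite sum_zero_loc. ring. intros s Hs; rewrite Mhat_m1 by lia; ring. }
  assert (HF1 : Fh 1 = 0).
  { unfold Fh. rewrite Mhat_1 by lia. rewrite sum_zero_loc. ring. intros s Hs; rewrite Mhat_1 by lia; ring. }
  assert (HPc : forall x, continuous P x) by (intros; eapply PolyN_cont; eauto).
  assert (HP0 : RInt P (-1) 1 = 0).
  { rewrite (is_RInt_unique _ _ _ _ (is_RInt_derive Fh P (-1) 1 (fun x _ => HFd x) (fun x _ => HPc x))).
    rewrite HF1, HFm1. unfold minus, plus, opp; simpl; rr; ring. }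
  assert (Hall : forall s, (1 <= s <= k)%nat -> P (alpha s) = 0).
  { assert (Hq := Quad k alpha a P Hv Ho (PolyN_mono _ _ _ (Nat.le_succ_diag_r _) HPp)).
    rewrite HP0 in Hq. destruct k as [|k']; [lia|].
    rewrite sumR_S in Hq by lia. rewrite sum_zero_loc in Hq.
    2:{ intros s Hs. unfold P. rewrite Hm by lia. ring. }
    assert (Hw : a k' < a (S k')).
    { destruct Hv as [_ [_ [_ [_ [H _]]]]]. apply H. lia. }
    rewrite Nat.sub_succ, Nat.sub_0_r in Hq.
    assert (HPk : P (alpha (S k')) = 0).
    { apply (Rmult_eq_reg_l (a (S k') - a k')). rr. lra. lra. }
    intros s Hs. destruct (Nat.eq_dec s (S k')) as [->|Hne]; auto.
    unfold P; apply Hm; lia. }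
  set (Q := fun x => (x - 1) * P x).
  assert (HQp : PolyN (S (S k)) Q).
  { apply (PolyN_ext _ (fun x => x * P x + (-1) * P x)).
    apply PolyN_add. apply PolyN_mulx; auto. apply PolyN_scal. eapply PolyN_mono; [|eauto]; lia.
    intros; unfold Q; ring. }
  assert (HQ0 : RInt Q (-1) 1 = 0).
  { rewrite (Quad k alpha a Q Hv Ho HQp). apply sum_zero_loc. intros s Hs. unfold Q. rewrite Hall by lia. ring. }
  assert (HFc : forall x, continuous Fh x).
  { intros x. apply (ex_derive_continuous (K:=R_AbsRing) (V:=R_NormedModule)). exists (P x). apply HFd. }
  assert (HFQ : is_RInt (fun x => Fh x + Q x) (-1) 1 0).
  { assert (D : forall x, Rmin (-1) 1 <= x <= Rmax (-1) 1 ->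
       is_derive (fun x => (x - 1) * Fh x) x (Fh x + Q x)).
    { intros x _. eapply isd_val. apply isd_mult. apply isd_minus. apply isd_id. apply isd_const.
      apply HFd. unfold Q; rr; ring. }
    assert (C : forall x, Rmin (-1) 1 <= x <= Rmax (-1) 1 -> continuous (fun x => Fh x + Q x) x).
    { intros x _. apply (continuous_plus Fh Q). auto. eapply PolyN_cont; eauto. }
    generalize (is_RInt_derive _ _ (-1) 1 D C). 
    intros H. match type of H with is_RInt _ _ _ ?w => replace w with 0 in H end. exact H.
    rewrite HFm1. unfold minus, plus, opp; simpl; rr; ring. }
  assert (HFi : RInt Fh (-1) 1 = 0).
  { apply is_RInt_unique.
    generalize (is_RInt_minus _ _ _ _ _ _ HFQ (RInt_correct (V:=R_CompleteNormedModule) Q (-1) 1 (ex_RInt_Poly _ _ _ _ HQp))).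
    rewrite HQ0. intros H.
    match type of H with is_RInt _ _ _ ?w => replace w with 0 in H end.
    2:{ unfold minus, plus, opp; simpl; rr; ring. }
    eapply (is_RInt_ext (V:=R_NormedModule)). 2: exact H.
    intros; unfold minus, plus, opp; simpl; rr; ring. }
  set (u := 2 / (r - l)). set (v := - (l + r) / (r - l)).
  assert (Hu : u <> 0) by (unfold u; unfold Rdiv; apply Rmult_integral_contrapositive_currified; [lra| apply Rinv_neq_0_compat; lra]).
  set (g := fun y => Fh (u * y + v)).
  assert (Hgd : forall y, is_derive g y (u * P (u * y + v))).
  { intros y. eapply isd_val. apply (is_derive_comp Fh (fun y => u * y + v)). apply HFd.
    apply isd_plus. apply isd_scal. apply isd_id. apply isd_const. unfold scal; simpl; unfold mult; simpl; rr; ring. }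
  assert (Hgi : ex_RInt g l r).
  { apply (ex_RInt_continuous (V:=R_CompleteNormedModule)). intros y _. apply (ex_derive_continuous (K:=R_AbsRing) (V:=R_NormedModule)).
    eexists; apply Hgd. }
  assert (HFe : ex_RInt Fh (u * l + v) (u * r + v)).
  { apply (ex_RInt_continuous (V:=R_CompleteNormedModule)). intros; auto. }
  assert (Hc := RInt_comp_lin Fh u v l r HFe).
  replace (u * l + v) with (-1) in Hc by (unfold u, v; field; lra).
  replace (u * r + v) with 1 in Hc by (unfold u, v; field; lra).
  rewrite HFi in Hc. assert (E := RInt_scal (V:=R_CompleteNormedModule) g l r u Hgi). unfold g in E at 1. rewrite E in Hc.
  rewrite (RInt_ext _ g).
  - unfold scal in Hc; simpl in Hc; unfold mult in Hc; simpl in Hc.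
    apply (Rmult_eq_reg_l u); auto. rr. lra.
  - intros x _. unfold g. change (Fh (hatmap l r x) = Fh (u * x + v)). f_equal. unfold hatmap, u, v. field. lra.
Qed.

Theorem mainTheorem5 :
  forall (k Nx Ny : nat) (xs ys : nat -> R)
         (alx ax aly ay : nat -> R) (u : R -> R -> R)
         (bsx bsy : nat -> nat -> R) (i j : nat),
    (1 <= k)%nat ->
    mesh1d Nx xs -> mesh1d Ny ys ->
    valid_params k alx ax -> valid_params k aly ay ->
    (* tensorial k-k-order orthogonality condition *)
    ortho_cond k k alx ax -> ortho_cond k k aly ay ->
    uniquely_solvable k alx -> uniquely_solvable k aly ->
    (1 <= i <= Nx)%nat -> (1 <= j <= Ny)%nat ->
    (* b*_{s,t}, t in {0,1}, 2 <= s <= k: the x-direction corrections *)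
    (forall t m, (t <= 1)%nat -> (1 <= m <= k - 1)%nat ->
       sum_n_m (fun s => bsx s t * Legendre (s - 1) (alx m)) 2 k
       + Mcoef xs ys u i j (S k) t * Legendre k (alx m) = 0) ->
    (* b*_{s,t}, s in {0,1}, 2 <= t <= k: the y-direction corrections *)
    (forall s m, (s <= 1)%nat -> (1 <= m <= k - 1)%nat ->
       sum_n_m (fun t => bsy s t * Legendre (t - 1) (aly m)) 2 k
       + Mcoef xs ys u i j s (S k) * Legendre k (aly m) = 0) ->
    RInt (RSx k xs ys u i j bsx 0) (xs (i - 1)%nat) (xs i) = 0 /\
    RInt (RSx k xs ys u i j bsx 1) (xs (i - 1)%nat) (xs i) = 0 /\
    RInt (RSy k xs ys u i j bsy 0) (ys (j - 1)%nat) (ys j) = 0 /\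
    RInt (RSy k xs ys u i j bsy 1) (ys (j - 1)%nat) (ys j) = 0.
Proof.
  intros k Nx Ny xs ys alx ax aly ay u bsx bsy i j Hk Mx My Vx Vy Ox Oy _ _ Hi Hj Hbx Hby.
  assert (Lx : xs (i - 1)%nat < xs i).
  { destruct Mx as [_ [_ [_ H]]]. replace i with (S (i - 1)) at 2 by lia. apply H; lia. }
  assert (Ly : ys (j - 1)%nat < ys j).
  { destruct My as [_ [_ [_ H]]]. replace j with (S (j - 1)) at 2 by lia. apply H; lia. }
  repeat split.
  - unfold RSx. apply (Gen k alx ax (fun s => bsx s 0%nat)); [lia|exact Vx|exact Ox|exact Lx|intros m Hm; apply Hbx; lia].
  - unfold RSx. apply (Gen k alx ax (fun s => bsx s 1%nat)); [lia|exact Vx|exact Ox|exact Lx|intros m Hm; apply Hbx; lia].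
  - unfold RSy. apply (Gen k aly ay (fun t => bsy 0%nat t)); [lia|exact Vy|exact Oy|exact Ly|intros m Hm; apply Hby; lia].
  - unfold RSy. apply (Gen k aly ay (fun t => bsy 1%nat t)); [lia|exact Vy|exact Oy|exact Ly|intros m Hm; apply Hby; lia].
Qed.
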